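(* Let $V$ be a finite set and let $A$ be a real symmetric matrix indexed by $V$. Consider the statements: (i) $A$ has a perfect elimination ordering; (ii) $A$ has no weighted chordless cycle; (iii) every level graph of $A$ is chordal. Then (i) implies (ii), and (ii) implies (iii).
   Context: A perfect elimination ordering of $A$ is a linear order $\pi$ of $V$ with $A_{yz}\ge\min\{A_{xy},A_{xz}\}$ for all $x<_\pi y<_\pi z$. A walk $W=(v_0,\dots,v_p)$ of elements of $V$ is weighted chordless in $A$ if $A_{v_{i-1}v_{i+1}}<\min\{A_{v_{i-1}v_i},A_{v_{i+1}v_i}\}$ for $1\le i\le p-1$; it is a weighted chordless cycle if in addition $v_0=v_p$, the elements $v_0,\dots,v_{p-1}$ are distinct, and $A_{v_{p-1}v_1}<\min\{A_{v_{p-1}v_0},A_{v_0v_1}\}$. If $\alpha_0<\dots<\alpha_L$ are the distinct values of the entries of $A$, the level graph $G_\ell$ is the graph on $V$ with edges the pairs $\{x,y\}$ with $A_{xy}\ge\alpha_\ell$. A graph is chordal if it contains no chordless (induced) cycle of length at least 4. *)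

(* Defs.v *)
From mathcomp Require Import all_boot all_order all_algebra.
Set Implicit Arguments. Unset Strict Implicit. Unset Printing Implicit Defensive.
Import Order.TTheory GRing.Theory Num.Theory.
Local Open Scope ring_scope.

Section Defs.
Variables (R : realFieldType) (V : finType).

Definition symmetric_mx (A : V -> V -> R) : Prop := forall x y, A x y = A y x.

(* A linear order pi of V is encoded as a duplicate-free enumeration s of V
   (perm_eq s (enum V)); x <_pi y iff index x s < index y s. *)
Definition perfect_elimination_ordering (A : V -> V -> R) (s : seq V) : Prop :=
  perm_eq s (enum V) /\
  forall x y z, (index x s < index y s)%N -> (index y s < index z s)%N ->
    Num.min (A x y) (A x z) <= A y z.

Definition has_peo (A : V -> V -> R) : Prop :=
  exists s : seq V, perfect_elimination_ordering A s.

(* W = [:: v_0; ...; v_p], p = (size W).-1 *)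
Definition weighted_chordless_walk (A : V -> V -> R) (W : seq V) : Prop :=
  forall (x0 : V) (i : nat), (0 < i)%N -> (i < (size W).-1)%N ->
    A (nth x0 W i.-1) (nth x0 W i.+1)
      < Num.min (A (nth x0 W i.-1) (nth x0 W i)) (A (nth x0 W i.+1) (nth x0 W i)).

Definition weighted_chordless_cycle (A : V -> V -> R) (W : seq V) : Prop :=
  let p := (size W).-1 in
  (3 <= p)%N /\ weighted_chordless_walk A W /\
  forall x0 : V,
    nth x0 W 0 = nth x0 W p /\ uniq (take p W) /\
    A (nth x0 W p.-1) (nth x0 W 1)
      < Num.min (A (nth x0 W p.-1) (nth x0 W 0)) (A (nth x0 W 0) (nth x0 W 1)).

Definition level_graph (A : V -> V -> R) (alpha : R) : rel V :=
  fun x y => (x != y) && (alpha <= A x y).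

Definition chordless_cycle (e : rel V) (c : seq V) : Prop :=
  let k := size c in
  (4 <= k)%N /\ uniq c /\
  forall (x0 : V) (i j : nat), (i < k)%N -> (j < k)%N -> i != j ->
    e (nth x0 c i) (nth x0 c j) = ((i.+1 %% k)%N == j) || ((j.+1 %% k)%N == i).

Definition chordal (e : rel V) : Prop := forall c : seq V, ~ chordless_cycle e c.

End Defs.

(* Main.v *)
Require Import Defs.
From mathcomp Require Import all_boot all_order all_algebra.
From mathcomp Require Import zify.
Import Order.TTheory GRing.Theory Num.Theory.
Local Open Scope ring_scope.

Lemma peo_contra (R : realFieldType) (V : finType) (A : V -> V -> R) s x y z :
  symmetric_mx A -> perfect_elimination_ordering A s ->
  (index x s < index y s)%N -> (index x s < index z s)%N ->
  index y s != index z s -> A y z < Num.min (A y x) (A z x) -> False.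
Proof.
move=> HA [_ Hp] hy hz hyz.
rewrite (HA y x) (HA z x).
case: (ltngtP (index y s) (index z s)) hyz => // h _.
  by move=> H; have := lt_le_trans H (Hp _ _ _ hy h); rewrite ltxx.
by move=> H; have := Hp _ _ _ hz h; rewrite (HA z y) minC => H2; have := lt_le_trans H H2; rewrite ltxx.
Qed.

Lemma part1 (R : realFieldType) (V : finType) (A : V -> V -> R) :
  symmetric_mx A -> has_peo A -> forall W : seq V, ~ weighted_chordless_cycle A W.
Proof.
move=> HA [s Hs] W; rewrite /weighted_chordless_cycle /=.
set p := (size W).-1.
move=> [Hp [Hwalk Hcyc]].
have [w0 _] : exists w0 : V, true by move: Hp; rewrite /p; case: (W) => [|w ?] //; exists w.
have [H0p [Huniq Hlast]] := Hcyc w0.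
have pW : (p <= size W)%N by rewrite /p; lia.
have Hdist : forall j1 j2, (j1 < p)%N -> (j2 < p)%N -> j1 != j2 ->
    index (nth w0 W j1) s != index (nth w0 W j2) s.
  move=> j1 j2 h1 h2 h12; apply/negP => /eqP e.
  have memS : forall x, x \in s by move=> x; rewrite (perm_mem Hs.1) mem_enum.
  have e2 : nth w0 W j1 = nth w0 W j2.
    by rewrite -(nth_index w0 (memS (nth w0 W j1))) e nth_index.
  move: e2; rewrite -(nth_take w0 h1) -(nth_take w0 h2) => /eqP.
  by rewrite nth_uniq ?size_takel // (negbTE h12).
pose P := fun n => [exists j : 'I_p, index (nth w0 W j) s == n].
have Pex : exists n, P n.
  have h0 : (0 < p)%N by lia.
  by exists (index (nth w0 W 0) s); apply/existsP; exists (Ordinal h0).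
case: (ex_minnP Pex) => n /existsP [[i ip] /= /eqP Hi] Hmin.
have Hlt : forall j, (j < p)%N -> j != i -> (index (nth w0 W i) s < index (nth w0 W j) s)%N.
  move=> j jp ji; rewrite ltn_neqAle Hdist //; last by rewrite eq_sym.
  by rewrite Hi Hmin //; apply/existsP; exists (Ordinal jp).
have [a [b [ap [bp [ai [bi [ab Hab]]]]]]] : exists a b, (a < p)%N /\ (b < p)%N /\
   a != i /\ b != i /\ a != b /\
   A (nth w0 W a) (nth w0 W b) < Num.min (A (nth w0 W a) (nth w0 W i)) (A (nth w0 W b) (nth w0 W i)).
  case: (posnP i) => [i0|ipos].
    exists p.-1, 1%N; rewrite i0; do !split; try lia.
    by rewrite (HA (nth w0 W 1) (nth w0 W 0)).
  have Hw := Hwalk w0 i ipos ip.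
  case: (ltngtP i.+1 p) => [h|h|h]; last first.
  - exists i.-1, 0%N; do !split; try lia.
    by rewrite H0p -h.
  - lia.
  - by exists i.-1, i.+1; do !split; try lia.
exact: (@peo_contra _ _ _ _ _ _ _ HA Hs (Hlt _ ap ai) (Hlt _ bp bi) (Hdist _ _ ap bp ab) Hab).
Qed.

Lemma part2 (R : realFieldType) (V : finType) (A : V -> V -> R) :
  symmetric_mx A -> (forall W : seq V, ~ weighted_chordless_cycle A W) ->
  forall alpha : R, chordal (level_graph A alpha).
Proof.
move=> HA Hno alpha c; rewrite /chordless_cycle /=.
set k := size c.
move=> [Hk [Hu He]].
have [c0 _] : exists c0 : V, true by move: Hk; rewrite /k; case: (c) => [|w ?] //; exists w.
pose W := rcons c (nth c0 c 0).
apply: (Hno W).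
have sW : (size W).-1 = k by rewrite size_rcons.
have nW : forall x0 j, (j < k)%N -> nth x0 W j = nth c0 c j.
  by move=> x0 j jk; rewrite nth_rcons -/k jk (set_nth_default c0).
have nWk : forall x0, nth x0 W k = nth c0 c 0.
  by move=> x0; rewrite nth_rcons -/k ltnn eqxx.
have nd : forall i j, (i < k)%N -> (j < k)%N -> i != j -> nth c0 c i != nth c0 c j.
  by move=> i j ik jk ij; rewrite nth_uniq.
have Lg : forall i j, (i < k)%N -> (j < k)%N -> i != j ->
    (alpha <= A (nth c0 c i) (nth c0 c j)) = ((i.+1 %% k)%N == j) || ((j.+1 %% k)%N == i).
  by move=> i j ik jk ij; rewrite -(He c0) // /level_graph nd.
have Adj : forall i, (i.+1 < k)%N -> alpha <= A (nth c0 c i) (nth c0 c i.+1).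
  move=> i ik; rewrite Lg ?(ltnW ik) ?(modn_small ik) ?eqxx //; lia.
have Wrap : alpha <= A (nth c0 c k.-1) (nth c0 c 0).
  rewrite Lg; try lia.
  by rewrite prednK ?modnn ?eqxx //; lia.
have Non : forall i j, (i < j)%N -> (j < k)%N -> j != i.+1 -> ~~ ((i == 0%N) && (j == k.-1)) ->
    A (nth c0 c i) (nth c0 c j) < alpha.
  move=> i j ij jk ji1 h; rewrite ltNge Lg; try lia.
  rewrite (modn_small (_ : i.+1 < k)%N); last by lia.
  rewrite eq_sym (negbTE ji1) /=.
  case: (ltngtP j.+1 k) => [h1|h1|h1].
  - by rewrite modn_small //; lia.
  - lia.
  - by rewrite h1 modnn; lia.
split; first by rewrite sW; lia.
split.
  move=> x0 i i0 ik; rewrite sW in ik.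
  case: i i0 ik => [//|i] _ ik /=.
  rewrite !(nW x0 i) ?(nW x0 i.+1) //; try lia.
  case: (ltngtP i.+2 k) => [h|h|h]; last first.
  - rewrite h nWk lt_min; apply/andP; split.
      apply: (lt_le_trans (y := alpha)); first by rewrite HA; apply: Non; lia.
      exact: Adj.
    apply: (lt_le_trans (y := alpha)); first by rewrite HA; apply: Non; lia.
    by rewrite HA (_ : i.+1 = k.-1) //; lia.
  - lia.
  - rewrite nW // lt_min; apply/andP; split.
      apply: (lt_le_trans (y := alpha)); first by apply: Non; lia.
      by apply: Adj; lia.
    apply: (lt_le_trans (y := alpha)); first by apply: Non; lia.
    by rewrite HA; apply: Adj; lia.
move=> x0; rewrite sW; split; first by rewrite nW ?nWk //; lia.
split; first by rewrite -/W /W -cats1 take_size_cat.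
rewrite !nW ?nWk; try lia.
rewrite lt_min; apply/andP; split.
  apply: (lt_le_trans (y := alpha)); first by rewrite HA; apply: Non; lia.
  exact: Wrap.
apply: (lt_le_trans (y := alpha)); first by rewrite HA; apply: Non; lia.
by apply: Adj; lia.
Qed.

Theorem lemma4 (R : realFieldType) (V : finType) (A : V -> V -> R) :
  symmetric_mx A ->
  (has_peo A -> forall W : seq V, ~ weighted_chordless_cycle A W) /\
  ((forall W : seq V, ~ weighted_chordless_cycle A W) ->
     forall alpha : R, (exists x y, A x y = alpha) -> chordal (level_graph A alpha)).
Proof.
move=> HA; split; first exact: part1.
by move=> H alpha _; apply: part2.
Qed.
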